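(* Consider the voting game described in the context with complete information (all voters' types are common knowledge). Under liquid democracy there exists a best equilibrium (in terms of information aggregation) $\sigma$, and the probability that the election outcome matches the state under $\sigma$ is at least as large as under the best equilibrium of direct democracy and at least as large as under the best equilibrium of representative democracy.
   Context: Voters $\mathcal N=\{1,\dots,N\}$ choose between alternatives $A$ and $B$; the alternative receiving a simple majority of the votes cast wins, ties broken uniformly at random. There is an unknown state $\omega\in\{a,b\}$ with common prior $\Pr(\omega=a)=\pi\in(0,1)$. Each voter $i$ has a type $t_i=(p_i,q_i)$ with preference $p_i\in\{A,B,I\}$ and precision $q_i\in[1/2,1]$. An independent voter ($p_i=I$) gets payoff $1$ if the outcome is $A$ and $\omega=a$ or the outcome is $B$ and $\omega=b$, and $0$ otherwise; a partisan with $p_i=A$ (resp. $p_i=B$) gets payoff $1$ iff the outcome is $A$ (resp. $B$), else $0$. Each voter $i$ observes a private signal $s_i\in\{a,b\}$ with $\Pr(s_i=\omega\mid\omega)=q_i$, signals independent conditional on $\omega$. A (pure interim) strategy of voter $i$ maps her signal to an action. Direct democracy (DD): actions are $a$ (vote for $A$), $b$ (vote for $B$), $x$ (abstain). Liquid democracy (LD): additionally $d_j$ (delegate to voter $j\neq i$); delegation is transitive (votes held by a delegator pass on to whomever she delegates to), all votes held by voters in a delegation cycle are abstained, and a voter who does not delegate casts all votes she holds (her own plus those delegated to her) for the alternative she chooses or abstains all of them. Representative democracy (RD): there is a fixed set of representatives $\mathcal J$ consisting of some subset of $\mathcal N$ together with two non-strategic representatives $a^*,b^*\notin\mathcal N$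 who always vote for $A$ and $B$ respectively; a representative in $\mathcal N$ chooses among $a,b,x$, and a non-representative chooses between abstaining and delegating to some representative in $\mathcal J$. An equilibrium is a Bayes Nash equilibrium in which no voter uses a weakly dominated strategy. An equilibrium is a best equilibrium (in terms of information aggregation) if it maximizes, among equilibria of the mechanism, the probability that the outcome matches the state (outcome $A$ when $\omega=a$, outcome $B$ when $\omega=b$). *)

(* Defs.v *)
From mathcomp Require Import all_boot all_order all_algebra.
Set Implicit Arguments. Unset Strict Implicit. Unset Printing Implicit Defensive.
Import Order.TTheory GRing.Theory Num.Theory.
Local Open Scope ring_scope.

(* Preference of a voter: partisan for A, partisan for B, or independent. *)
Inductive pref := PrefA | PrefB | PrefI.

(* States and signals are booleans: true = a, false = b. *)

(* Probability that A wins, given the numbers of votes for A and for B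
   (simple majority, ties broken uniformly at random). *)
Definition winprob {R : realFieldType} (nA nB : nat) : R :=
  if (nB < nA)%N then 1 else if (nA < nB)%N then 0 else 1 / 2%:R.

Inductive ldact (N : nat) :=
  | LVoteA | LVoteB | LAbstain | LDelegate of 'I_N.
Arguments LVoteA {N}. Arguments LVoteB {N}. Arguments LAbstain {N}.

Definition ld_next N (act : 'I_N -> ldact N) (i : 'I_N) : 'I_N :=
  match act i with LDelegate j => j | _ => i end.
(* after N steps a chain has either reached a non-delegating voter
   (its "guru") or is trapped in a delegation cycle *)
Definition ld_final N (act : 'I_N -> ldact N) (i : 'I_N) : 'I_N :=
  iter N (ld_next act) i.
(* does voter i's own vote end up cast for A (resp. B)?  Votes reaching a
   cycle end at a delegating voter and are thus abstained. *)
Definition ld_forA N (act : 'I_N -> ldact N) (i : 'I_N) : bool :=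
  if act (ld_final act i) is LVoteA then true else false.
Definition ld_forB N (act : 'I_N -> ldact N) (i : 'I_N) : bool :=
  if act (ld_final act i) is LVoteB then true else false.
Definition ld_winA {R : realFieldType} N (act : 'I_N -> ldact N) : R :=
  winprob #|[pred i | ld_forA act i]| #|[pred i | ld_forB act i]|.

Definition ld_valid N (i : 'I_N) (x : ldact N) : bool :=
  if x is LDelegate j then j != i else true.
Definition dd_valid N (i : 'I_N) (x : ldact N) : bool :=
  if x is LDelegate _ then false else true.

(* RDelA / RDelB: delegate to the non-strategic representatives a*, b* *)
Inductive rdact (N : nat) :=
  | RVoteA | RVoteB | RAbstain | RDelegate of 'I_N | RDelA | RDelB.
Arguments RVoteA {N}. Arguments RVoteB {N}. Arguments RAbstain {N}.
Arguments RDelA {N}. Arguments RDelB {N}.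

Definition rd_valid N (J : {set 'I_N}) (i : 'I_N) (x : rdact N) : bool :=
  if i \in J then
    match x with RVoteA | RVoteB | RAbstain => true | _ => false end
  else
    match x with
    | RAbstain | RDelA | RDelB => true
    | RDelegate j => j \in J
    | _ => false
    end.
Definition rd_forA N (act : 'I_N -> rdact N) (i : 'I_N) : bool :=
  match act i with
  | RVoteA | RDelA => true
  | RDelegate j => if act j is RVoteA then true else false
  | _ => false
  end.
Definition rd_forB N (act : 'I_N -> rdact N) (i : 'I_N) : bool :=
  match act i with
  | RVoteB | RDelB => true
  | RDelegate j => if act j is RVoteB then true else false
  | _ => false
  end.
Definition rd_winA {R : realFieldType} N (act : 'I_N -> rdact N) : R :=
  winprob #|[pred i | rd_forA act i]| #|[pred i | rd_forB act i]|.

Section Game.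
Variables (R : realFieldType) (N : nat) (p : 'I_N -> pref) (q : 'I_N -> R)
          (pi : R).
Variables (Act : Type) (valid : 'I_N -> Act -> bool)
          (winA : ('I_N -> Act) -> R).

Definition prior (w : bool) : R := if w then pi else 1 - pi.
Definition lik (s : {ffun 'I_N -> bool}) (w : bool) : R :=
  \prod_(i < N) (if s i == w then q i else 1 - q i).

Definition payoff (pr : pref) (w : bool) (x : R) : R :=
  match pr with
  | PrefA => x
  | PrefB => 1 - x
  | PrefI => if w then x else 1 - x
  end.

(* pure interim strategy profile: each voter maps her signal to an action *)
Definition profile := 'I_N -> bool -> Act.

Definition eu (i : 'I_N) (sg : profile) : R :=
  \sum_(w : bool) \sum_(s : {ffun 'I_N -> bool})
     prior w * lik s w * payoff (p i) w (winA (fun j => sg j (s j))).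

Definition pcorrect (sg : profile) : R :=
  \sum_(w : bool) \sum_(s : {ffun 'I_N -> bool})
     prior w * lik s w * payoff PrefI w (winA (fun j => sg j (s j))).

Definition valid_strat (i : 'I_N) (t : bool -> Act) := forall b, valid i (t b).
Definition valid_prof (sg : profile) := forall i, valid_strat i (sg i).
Definition upd (sg : profile) (i : 'I_N) (t : bool -> Act) : profile :=
  fun j => if j == i then t else sg j.

Definition is_BNE (sg : profile) :=
  valid_prof sg /\
  forall i t, valid_strat i t -> eu i (upd sg i t) <= eu i sg.

Definition weakly_dominated (i : 'I_N) (t : bool -> Act) :=
  exists t', valid_strat i t' /\
    (forall sg, valid_prof sg -> eu i (upd sg i t) <= eu i (upd sg i t')) /\
    (exists sg, valid_prof sg /\ eu i (upd sg i t) < eu i (upd sg i t')).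

Definition is_equilibrium (sg : profile) :=
  is_BNE sg /\ forall i, ~ weakly_dominated i (sg i).
End Game.

(* Main.v *)
Require Import Defs.
From mathcomp Require Import all_boot all_order all_algebra.
From mathcomp Require Import ring lra zify.
From Stdlib Require Import Lia.
From Stdlib Require Import Classical FunctionalExtensionality.
Set Implicit Arguments. Unset Strict Implicit. Unset Printing Implicit Defensive.
Import Order.TTheory GRing.Theory Num.Theory.
Local Open Scope ring_scope.

Lemma half_facts (R : realFieldType) : 0 < 1 / 2%:R :> R /\ 1 / 2%:R < 1 :> R.
Proof. split; lra. Qed.

Lemma winprob_mono (R : realFieldType) nA nB nA' nB' :
  (nA <= nA')%N -> (nB' <= nB)%N -> winprob nA nB <= winprob nA' nB' :> R.
Proof.
move=> h1 h2; have [h3 h4] := half_facts R.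
rewrite /winprob; repeat case: ifP => ?; try lra; lia.
Qed.

Lemma winprob_lt1 (R : realFieldType) nB : winprob 0 nB < 1 :> R.
Proof. have [h3 h4] := half_facts R. rewrite /winprob; repeat case: ifP => ?; lra. Qed.
Lemma winprob_gt0 (R : realFieldType) nA : 0 < winprob nA 0 :> R.
Proof. have [h3 h4] := half_facts R. rewrite /winprob; repeat case: ifP => ?; try lra; lia. Qed.
Lemma winprob_1 (R : realFieldType) nA : (0 < nA)%N -> winprob nA 0 = 1 :> R.
Proof. by rewrite /winprob => ->. Qed.
Lemma winprob_0 (R : realFieldType) nB : (0 < nB)%N -> winprob 0 nB = 0 :> R.
Proof. by rewrite /winprob => ->. Qed.

Lemma ltr_sum_one (R : realFieldType) (I : finType) (P : pred I) (F G : I -> R) i0 :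
  (forall i, P i -> F i <= G i) -> P i0 -> F i0 < G i0 ->
  \sum_(i | P i) F i < \sum_(i | P i) G i.
Proof.
move=> hle hp hlt; rewrite (bigD1 i0) //= [X in _ < X](bigD1 i0) //=.
apply: ltr_leD => //; apply: ler_sum => i /andP[? _]; exact: hle.
Qed.

Definition setp N (Act : Type) (act : 'I_N -> Act) (i : 'I_N) (a : Act) : 'I_N -> Act :=
  fun j => if j == i then a else act j.

Section Generic.
Variables (R : realFieldType) (N : nat) (p : 'I_N -> pref) (q : 'I_N -> R) (pi : R).
Hypothesis hpi : 0 < pi < 1.
Hypothesis hq : forall i, 1 / 2%:R <= q i <= 1.

Lemma prior_gt0 w : 0 < prior pi w.
Proof. case/andP: hpi => h1 h2; rewrite /prior; case: w; lra. Qed.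

Lemma lik_ge0 s w : 0 <= lik q s w.
Proof.
rewrite /lik; apply: prodr_ge0 => i _; have /andP[h1 h2] := hq i.
case: ifP => _; lra.
Qed.

Lemma lik_const_gt0 w : 0 < lik q [ffun=> w] w.
Proof.
rewrite /lik; apply: prodr_gt0 => i _; have /andP[h1 h2] := hq i.
rewrite ffunE eqxx; lra.
Qed.

Lemma weight_ge0 s w : 0 <= prior pi w * lik q s w.
Proof. by apply: mulr_ge0; [apply: ltW; apply: prior_gt0 | apply: lik_ge0]. Qed.

Lemma weight_gt0 w : 0 < prior pi w * lik q [ffun=> w] w.
Proof. by apply: mulr_gt0; [apply: prior_gt0 | apply: lik_const_gt0]. Qed.

Variables (Act : Type) (valid : 'I_N -> Act -> bool) (winA : ('I_N -> Act) -> R).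
Variables (abst : Act) (oA oB : 'I_N -> Act).
Hypothesis Hab : forall i, valid i abst.
Hypothesis HoA : forall i, valid i (oA i).
Hypothesis HoB : forall i, valid i (oB i).
Hypothesis H3A : forall act i, (forall j, valid j (act j)) -> winA act <= winA (setp act i (oA i)).
Hypothesis H3B : forall act i, (forall j, valid j (act j)) -> winA (setp act i (oB i)) <= winA act.
Hypothesis H4A : forall i x, valid i x -> x <> oA i ->
  winA (setp (fun _ => abst) i x) < winA (setp (fun _ => abst) i (oA i)).
Hypothesis H4B : forall i x, valid i x -> x <> oB i ->
  winA (setp (fun _ => abst) i (oB i)) < winA (setp (fun _ => abst) i x).

Lemma upd_apply (sg : profile N Act) i t (s : {ffun 'I_N -> bool}) a :
  (fun j => upd sg i (fun _ => a) j (s j)) = setp (fun j => upd sg i t j (s j)) i a.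
Proof. apply: functional_extensionality => j; rewrite /upd /setp; by case: (j == i). Qed.

Lemma term_le_A i (sg : profile N Act) t w s :
  p i = PrefA -> valid_prof valid sg -> valid_strat valid i t ->
  prior pi w * lik q s w * payoff (p i) w (winA (fun j => upd sg i t j (s j))) <=
  prior pi w * lik q s w * payoff (p i) w (winA (fun j => upd sg i (fun _ => oA i) j (s j))).
Proof.
move=> hp hsg ht; rewrite hp /=; apply: ler_wpM2l; first exact: weight_ge0.
rewrite (upd_apply _ _ t); apply: H3A => j; rewrite /upd; case: eqP => [->|_]; [exact: ht| exact: hsg].
Qed.

Lemma term_le_B i (sg : profile N Act) t w s :
  p i = PrefB -> valid_prof valid sg -> valid_strat valid i t ->
  prior pi w * lik q s w * payoff (p i) w (winA (fun j => upd sg i t j (s j))) <=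
  prior pi w * lik q s w * payoff (p i) w (winA (fun j => upd sg i (fun _ => oB i) j (s j))).
Proof.
move=> hp hsg ht; rewrite hp /=; apply: ler_wpM2l; first exact: weight_ge0.
rewrite (upd_apply _ _ t) lerD2l lerN2; apply: H3B => j; rewrite /upd; case: eqP => [->|_]; [exact: ht| exact: hsg].
Qed.

Lemma eu_le_A i (sg : profile N Act) t :
  p i = PrefA -> valid_prof valid sg -> valid_strat valid i t ->
  eu p q pi winA i (upd sg i t) <= eu p q pi winA i (upd sg i (fun _ => oA i)).
Proof. move=> hp hsg ht; apply: ler_sum => w _; apply: ler_sum => s _; exact: term_le_A. Qed.

Lemma eu_le_B i (sg : profile N Act) t :
  p i = PrefB -> valid_prof valid sg -> valid_strat valid i t ->
  eu p q pi winA i (upd sg i t) <= eu p q pi winA i (upd sg i (fun _ => oB i)).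
Proof. move=> hp hsg ht; apply: ler_sum => w _; apply: ler_sum => s _; exact: term_le_B. Qed.

Lemma undom_A i : p i = PrefA -> ~ weakly_dominated p q pi valid winA i (fun _ => oA i).
Proof.
move=> hp [t' [ht' [_ [sg [hsg hlt]]]]].
have := @eu_le_A i sg t' hp hsg ht'; rewrite /upd; lra.
Qed.

Lemma undom_B i : p i = PrefB -> ~ weakly_dominated p q pi valid winA i (fun _ => oB i).
Proof.
move=> hp [t' [ht' [_ [sg [hsg hlt]]]]].
have := @eu_le_B i sg t' hp hsg ht'; rewrite /upd; lra.
Qed.

Definition sg0 : profile N Act := fun _ _ => abst.

Lemma sg0_valid : valid_prof valid sg0.
Proof. by move=> i b; apply: Hab. Qed.

Lemma upd_sg0 i t w :
  (fun j => upd sg0 i t j (([ffun=> w] : {ffun 'I_N -> bool}) j)) = setp (fun _ => abst) i (t w).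
Proof. apply: functional_extensionality => j; rewrite /upd /setp ffunE; by case: (j == i). Qed.

Lemma eq_own_A (tau : profile N Act) i b :
  is_equilibrium p q pi valid winA tau -> p i = PrefA -> tau i b = oA i.
Proof.
move=> [[hv _] hnd] hp; apply: NNPP => hne; apply: (hnd i).
exists (fun _ => oA i); split; first by move=> ?; apply: HoA.
split; first by move=> sg hsg; apply: eu_le_A.
exists sg0; split; first exact: sg0_valid.
apply: ltr_sum_one (b) _ _ _ => //.
  by move=> w _; apply: ler_sum => s _; apply: term_le_A => //; exact: sg0_valid.
apply: ltr_sum_one ([ffun=> b]) _ _ _ => //.
  by move=> s _; apply: term_le_A => //; exact: sg0_valid.
rewrite hp /= !upd_sg0; rewrite ltr_pM2l; last exact: weight_gt0.
exact: (H4A (hv i b) hne).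
Qed.

Lemma eq_own_B (tau : profile N Act) i b :
  is_equilibrium p q pi valid winA tau -> p i = PrefB -> tau i b = oB i.
Proof.
move=> [[hv _] hnd] hp; apply: NNPP => hne; apply: (hnd i).
exists (fun _ => oB i); split; first by move=> ?; apply: HoB.
split; first by move=> sg hsg; apply: eu_le_B.
exists sg0; split; first exact: sg0_valid.
apply: ltr_sum_one (b) _ _ _ => //.
  by move=> w _; apply: ler_sum => s _; apply: term_le_B => //; exact: sg0_valid.
apply: ltr_sum_one ([ffun=> b]) _ _ _ => //.
  by move=> s _; apply: term_le_B => //; exact: sg0_valid.
rewrite hp /= !upd_sg0; rewrite ltr_pM2l; last exact: weight_gt0.
rewrite ltrD2l ltrN2; exact: (H4B (hv i b) hne).
Qed.

End Generic.

Lemma iter_fix (T : Type) (f : T -> T) x n : f x = x -> iter n f x = x.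
Proof. move=> h; elim: n => //= n ->; exact: h. Qed.

Definition nodel N (a : ldact N) : bool := if a is LDelegate _ then false else true.

Lemma chain N (act : 'I_N -> ldact N) i a k n : nodel a ->
  iter n (ld_next (setp act i a)) k = i \/
  (iter n (ld_next (setp act i a)) k = iter n (ld_next act) k /\ iter n (ld_next act) k <> i).
Proof.
move=> ha; elim: n => [|n IH] /=.
  by case: (eqVneq k i) => [->|hk]; [left|right; split => //; apply/eqP].
case: IH => [->|[-> hne]].
  left; rewrite /ld_next /setp eqxx; by case: a ha.
have -> : ld_next (setp act i a) (iter n (ld_next act) k) = ld_next act (iter n (ld_next act) k).
  by rewrite /ld_next /setp; move/eqP/negbTE: hne => ->.
by case: (eqVneq (ld_next act (iter n (ld_next act) k)) i) => [->|h]; [left|right; split => //; apply/eqP].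
Qed.

Lemma final_cases N (act : 'I_N -> ldact N) i a k : nodel a ->
  ld_final (setp act i a) k = i \/
  (ld_final (setp act i a) k = ld_final act k /\ ld_final act k <> i).
Proof. exact: chain. Qed.

Lemma act_set_ne N (act : 'I_N -> ldact N) i a x : x <> i -> setp act i a x = act x.
Proof. by rewrite /setp => /eqP/negbTE ->. Qed.

Lemma ld_H3A (R : realFieldType) N (act : 'I_N -> ldact N) i :
  ld_winA act <= ld_winA (setp act i LVoteA) :> R.
Proof.
rewrite /ld_winA; apply: winprob_mono; apply: subset_leq_card; apply/subsetP => k; rewrite !inE /ld_forA /ld_forB.
- case: (@final_cases N act i LVoteA k) => // [->|[-> hne]]; first by rewrite /setp eqxx.
  by rewrite act_set_ne.
- case: (@final_cases N act i LVoteA k) => // [->|[-> hne]]; first by rewrite /setp eqxx.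
  by rewrite act_set_ne.
Qed.

Lemma ld_H3B (R : realFieldType) N (act : 'I_N -> ldact N) i :
  ld_winA (setp act i LVoteB) <= ld_winA act :> R.
Proof.
rewrite /ld_winA; apply: winprob_mono; apply: subset_leq_card; apply/subsetP => k; rewrite !inE /ld_forA /ld_forB.
- case: (@final_cases N act i LVoteB k) => // [->|[-> hne]]; first by rewrite /setp eqxx.
  by rewrite act_set_ne.
- case: (@final_cases N act i LVoteB k) => // [->|[-> hne]]; first by rewrite /setp eqxx.
  by rewrite act_set_ne.
Qed.


Lemma card0P N (P : pred 'I_N) : (forall k, P k = false) -> #|[pred k | P k]| = 0%N.
Proof. move=> h; apply: eq_card0 => k; rewrite inE; exact: h. Qed.

Lemma card_gt0P N (P : pred 'I_N) k : P k -> (0 < #|[pred k | P k]|)%N.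
Proof. move=> h; apply/card_gt0P; exists k; by rewrite inE. Qed.

Lemma ld_H4A (R : realFieldType) N i (x : ldact N) : x <> LVoteA ->
  ld_winA (setp (fun _ => LAbstain) i x) < ld_winA (setp (fun _ => LAbstain) i LVoteA) :> R.
Proof.
move=> hx; rewrite /ld_winA.
rewrite [X in winprob X _](card0P (P := ld_forA _)).
  rewrite [X in _ < winprob _ X](card0P (P := ld_forB _)).
    rewrite winprob_1 ?winprob_lt1 //; apply: (@card_gt0P _ _ i).
    rewrite /ld_forA /ld_final iter_fix; first by rewrite /setp eqxx.
    by rewrite /ld_next /setp eqxx.
  by move=> k; rewrite /ld_forB /setp; case: ifP.
by move=> k; rewrite /ld_forA /setp; case: ifP => //; case: x hx.
Qed.

Lemma ld_H4B (R : realFieldType) N i (x : ldact N) : x <> LVoteB ->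
  ld_winA (setp (fun _ => LAbstain) i LVoteB) < ld_winA (setp (fun _ => LAbstain) i x) :> R.
Proof.
move=> hx; rewrite /ld_winA.
rewrite [X in _ < winprob _ X](card0P (P := ld_forB _)).
  rewrite [X in winprob X _](card0P (P := ld_forA _)).
    rewrite winprob_0 ?winprob_gt0 //; apply: (@card_gt0P _ _ i).
    rewrite /ld_forB /ld_final iter_fix; first by rewrite /setp eqxx.
    by rewrite /ld_next /setp eqxx.
  by move=> k; rewrite /ld_forA /setp; case: ifP.
by move=> k; rewrite /ld_forB /setp; case: ifP => //; case: x hx.
Qed.

Definition emb N (x : rdact N) : ldact N :=
  match x with
  | RVoteA => LVoteA | RVoteB => LVoteB | RAbstain => LAbstain
  | RDelegate j => LDelegate j | RDelA => LVoteA | RDelB => LVoteB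
  end.

Lemma iter_two (T : Type) (f : T -> T) k j n : (0 < n)%N -> f k = j -> f j = j -> iter n f k = j.
Proof. case: n => // n _ h1 h2; rewrite iterSr h1; exact: iter_fix. Qed.

Lemma emul N (J : {set 'I_N}) (act : 'I_N -> rdact N)
  (hv : forall j, rd_valid J j (act j)) k :
  rd_forA act k = ld_forA (fun j => emb (act j)) k /\
  rd_forB act k = ld_forB (fun j => emb (act j)) k.
Proof.
have hk := hv k; rewrite /rd_forA /rd_forB /ld_forA /ld_forB.
have hN : (0 < N)%N by apply: leq_ltn_trans (ltn_ord k).
case hak: (act k) => [| | |j| |];
  try (rewrite /ld_final iter_fix /= ?hak //; by rewrite /ld_next hak).
move: hk; rewrite /rd_valid hak; case: ifP => // _ hj.
have := hv j; rewrite /rd_valid hj => hvj.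
rewrite /ld_final (@iter_two _ _ k j) //=; first by case: (act j) hvj.
  by rewrite /ld_next hak.
by rewrite /ld_next; case: (act j) hvj.
Qed.

Lemma rd_ld_win (R : realFieldType) N (J : {set 'I_N}) (act : 'I_N -> rdact N)
  (hv : forall j, rd_valid J j (act j)) :
  rd_winA act = ld_winA (fun j => emb (act j)) :> R.
Proof.
rewrite /rd_winA /ld_winA; congr winprob; apply: eq_card => k; rewrite !inE;
  by have [h1 h2] := emul hv k; rewrite ?h1 ?h2.
Qed.

Definition rdoA N (J : {set 'I_N}) i : rdact N := if i \in J then RVoteA else RDelA.
Definition rdoB N (J : {set 'I_N}) i : rdact N := if i \in J then RVoteB else RDelB.

Lemma rd_setp_valid N (J : {set 'I_N}) (act : 'I_N -> rdact N) i a :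
  (forall j, rd_valid J j (act j)) -> rd_valid J i a -> forall j, rd_valid J j (setp act i a j).
Proof. move=> hv ha j; rewrite /setp; case: eqP => [->|_] //. Qed.

Lemma emb_setp N (act : 'I_N -> rdact N) i a :
  (fun j => emb (setp act i a j)) = setp (fun j => emb (act j)) i (emb a).
Proof. apply: functional_extensionality => j; rewrite /setp; by case: (j == i). Qed.

Lemma rdoA_valid N (J : {set 'I_N}) i : rd_valid J i (rdoA J i).
Proof. by rewrite /rd_valid /rdoA; case: (i \in J). Qed.
Lemma rdoB_valid N (J : {set 'I_N}) i : rd_valid J i (rdoB J i).
Proof. by rewrite /rd_valid /rdoB; case: (i \in J). Qed.
Lemma emb_rdoA N (J : {set 'I_N}) i : emb (rdoA J i) = LVoteA.
Proof. by rewrite /rdoA; case: (i \in J). Qed.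
Lemma emb_rdoB N (J : {set 'I_N}) i : emb (rdoB J i) = LVoteB.
Proof. by rewrite /rdoB; case: (i \in J). Qed.

Lemma rd_H3A (R : realFieldType) N (J : {set 'I_N}) (act : 'I_N -> rdact N) i :
  (forall j, rd_valid J j (act j)) -> rd_winA act <= rd_winA (setp act i (rdoA J i)) :> R.
Proof.
move=> hv; rewrite (rd_ld_win _ hv) (rd_ld_win _ (rd_setp_valid hv (rdoA_valid J i))).
rewrite emb_setp emb_rdoA; exact: ld_H3A.
Qed.

Lemma rd_H3B (R : realFieldType) N (J : {set 'I_N}) (act : 'I_N -> rdact N) i :
  (forall j, rd_valid J j (act j)) -> rd_winA (setp act i (rdoB J i)) <= rd_winA act :> R.
Proof.
move=> hv; rewrite (rd_ld_win _ hv) (rd_ld_win _ (rd_setp_valid hv (rdoB_valid J i))).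
rewrite emb_setp emb_rdoB; exact: ld_H3B.
Qed.

Lemma abst_valid N (J : {set 'I_N}) j : rd_valid J j RAbstain.
Proof. by rewrite /rd_valid; case: (j \in J). Qed.

Lemma rd_H4A (R : realFieldType) N (J : {set 'I_N}) i x :
  rd_valid J i x -> x <> rdoA J i ->
  rd_winA (setp (fun _ => RAbstain) i x) < rd_winA (setp (fun _ => RAbstain) i (rdoA J i)) :> R.
Proof.
move=> hx hne.
have hv0 : forall j, rd_valid J j ((fun _ : 'I_N => RAbstain) j) by move=> j; exact: abst_valid.
rewrite (rd_ld_win _ (rd_setp_valid hv0 hx)) (rd_ld_win _ (rd_setp_valid hv0 (rdoA_valid J i))).
rewrite !emb_setp emb_rdoA; apply: ld_H4A => he; apply: hne.
move: hx he; rewrite /rd_valid /rdoA; case: (i \in J); by case: x.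
Qed.

Lemma rd_H4B (R : realFieldType) N (J : {set 'I_N}) i x :
  rd_valid J i x -> x <> rdoB J i ->
  rd_winA (setp (fun _ => RAbstain) i (rdoB J i)) < rd_winA (setp (fun _ => RAbstain) i x) :> R.
Proof.
move=> hx hne.
have hv0 : forall j, rd_valid J j ((fun _ : 'I_N => RAbstain) j) by move=> j; exact: abst_valid.
rewrite (rd_ld_win _ (rd_setp_valid hv0 hx)) (rd_ld_win _ (rd_setp_valid hv0 (rdoB_valid J i))).
rewrite !emb_setp emb_rdoB; apply: ld_H4B => he; apply: hne.
move: hx he; rewrite /rd_valid /rdoB; case: (i \in J); by case: x.
Qed.

Lemma argmax (R : realFieldType) (T : finType) (P : pred T) (f : T -> R) c0 :
  P c0 -> exists c, P c /\ forall c', P c' -> f c' <= f c.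
Proof. move=> h; case: (arg_maxP f h) => c Pc H; exists c; split => // c' /H //. Qed.

Definition ldcode N := option (option (option 'I_N)).
Definition dec_act N (c : ldcode N) : ldact N :=
  match c with
  | None => LVoteA | Some None => LVoteB | Some (Some None) => LAbstain
  | Some (Some (Some j)) => LDelegate j end.
Definition enc_act N (x : ldact N) : ldcode N :=
  match x with
  | LVoteA => None | LVoteB => Some None | LAbstain => Some (Some None)
  | LDelegate j => Some (Some (Some j)) end.
Lemma enc_actK N (x : ldact N) : dec_act (enc_act x) = x.
Proof. by case: x. Qed.

Definition code N := {ffun 'I_N -> {ffun bool -> ldcode N}}.
Definition dec N (c : code N) : profile N (ldact N) := fun i b => dec_act (c i b).
Definition enc N (sg : profile N (ldact N)) : code N := [ffun i => [ffun b => enc_act (sg i b)]].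
Lemma encK N (sg : profile N (ldact N)) : dec (enc sg) = sg.
Proof.
apply: functional_extensionality => i; apply: functional_extensionality => b.
by rewrite /dec /enc !ffunE enc_actK.
Qed.

Definition okp N (pr : pref) (x : ldact N) : bool :=
  match pr with
  | PrefA => if x is LVoteA then true else false
  | PrefB => if x is LVoteB then true else false
  | PrefI => true end.
Definition isI (pr : pref) : bool := if pr is PrefI then true else false.

Lemma upd_self N Act (sg : profile N Act) i : upd sg i (sg i) = sg.
Proof. apply: functional_extensionality => j; rewrite /upd; by case: eqP => [->|]. Qed.

Section Main.
Variables (R : realFieldType) (N : nat) (p : 'I_N -> pref) (q : 'I_N -> R) (pi : R).
Hypothesis hpi : 0 < pi < 1.
Hypothesis hq : forall i, 1 / 2%:R <= q i <= 1.

Definition validb (sg : profile N (ldact N)) : bool :=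
  [forall i, forall b, ld_valid i (sg i b)].
Definition Pb (sg : profile N (ldact N)) : bool :=
  [forall i, forall b, ld_valid i (sg i b) && okp (p i) (sg i b)].

Lemma validbP sg : validb sg -> valid_prof (@ld_valid N) sg.
Proof. by move=> /forallP h i b; move/forallP: (h i) => /(_ b). Qed.
Lemma validbP' sg : valid_prof (@ld_valid N) sg -> validb sg.
Proof. by move=> h; apply/forallP => i; apply/forallP => b; apply: h. Qed.
Lemma PbP sg : Pb sg -> valid_prof (@ld_valid N) sg /\ forall i b, okp (p i) (sg i b).
Proof.
move=> /forallP h; split => i b; move/forallP: (h i) => /(_ b) /andP[] //.
Qed.
Lemma PbP' sg : valid_prof (@ld_valid N) sg -> (forall i b, okp (p i) (sg i b)) -> Pb sg.
Proof. by move=> h1 h2; apply/forallP => i; apply/forallP => b; rewrite h1 h2. Qed.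

Notation W := (@ld_winA R N).
Notation EU := (eu p q pi W).
Notation PC := (pcorrect q pi W).

Lemma eu_I i sg : p i = PrefI -> EU i sg = PC sg.
Proof. by move=> hp; rewrite /eu /pcorrect hp. Qed.

Definition Phi i (t : bool -> ldact N) : R :=
  \sum_(c : code N | validb (dec c)) EU i (upd (dec c) i t).
Definition Psi (sg : profile N (ldact N)) : R :=
  \sum_(i | isI (p i)) Phi i (sg i).

Lemma Pb_upd sg i t : Pb sg -> p i = PrefI -> valid_strat (@ld_valid N) i t -> Pb (upd sg i t).
Proof.
move=> /PbP [h1 h2] hp ht; apply: PbP' => j b; rewrite /upd; case: eqP => [->|_] //.
- exact: h1.
- by rewrite hp.
Qed.

Lemma main_ld : exists sg, is_equilibrium p q pi (@ld_valid N) W sg /\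
  forall tau, Pb tau -> PC tau <= PC sg.
Proof.
pose sgd : profile N (ldact N) := fun i b =>
  match p i with PrefA => LVoteA | PrefB => LVoteB | PrefI => LAbstain end.
have Pd : Pb (dec (enc sgd)).
  by rewrite encK; apply: PbP' => i b; rewrite /sgd; case: (p i).
have [c1 [Pc1 H1]] := @argmax R (code N) (fun c => Pb (dec c)) (fun c => PC (dec c)) _ Pd.
pose M := PC (dec c1).
have hmax : forall tau, Pb tau -> PC tau <= M.
  by move=> tau htau; rewrite -(encK tau); apply: H1; rewrite encK.
have Pc1' : Pb (dec c1) && (PC (dec c1) == M) by rewrite Pc1 eqxx.
have [c2 [/andP [Pc2 /eqP hM] H2]] := @argmax R (code N) (fun c => Pb (dec c) && (PC (dec c) == M)) (fun c => Psi (dec c)) _ Pc1'.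
set sg := dec c2 in Pc2 hM H2.
have [hv hok] := PbP Pc2.
exists sg; split; last by move=> tau /hmax; rewrite hM.
have HoA : forall i, p i = PrefA -> sg i = (fun _ => LVoteA).
  move=> i hp; apply: functional_extensionality => b; have := hok i b; rewrite hp.
  by case: (sg i b).
have HoB : forall i, p i = PrefB -> sg i = (fun _ => LVoteB).
  move=> i hp; apply: functional_extensionality => b; have := hok i b; rewrite hp.
  by case: (sg i b).
have H3A' : forall (act : 'I_N -> ldact N) i, (forall j, ld_valid j (act j)) ->
   W act <= W (setp act i ((fun _ => LVoteA) i)) by move=> act i _; exact: ld_H3A.
have H3B' : forall (act : 'I_N -> ldact N) i, (forall j, ld_valid j (act j)) ->
   W (setp act i ((fun _ => LVoteB) i)) <= W act by move=> act i _; exact: ld_H3B.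
split; first split => //.
  move=> i t ht; case hp: (p i).
  - have := eu_le_A hpi hq H3A' hp hv ht; by rewrite -(HoA i hp) upd_self.
  - have := eu_le_B hpi hq H3B' hp hv ht; by rewrite -(HoB i hp) upd_self.
  - rewrite !eu_I // hM; apply: hmax; exact: Pb_upd.
move=> i; case hp: (p i).
- rewrite (HoA i hp); exact: (undom_A hpi hq H3A' hp).
- rewrite (HoB i hp); exact: (undom_B hpi hq H3B' hp).
move=> [t' [ht' [hle [sgw [hsgw hlt]]]]].
pose sg' := upd sg i t'.
have Pb' : Pb sg' by apply: Pb_upd.
have hM' : PC sg' = M.
  apply/eqP; rewrite eq_le hmax //=.
  rewrite -(eu_I sg' hp) -hM -(eu_I sg hp) -{1}(upd_self sg i); exact: hle.
have := H2 (enc sg'); rewrite encK Pb' hM' eqxx => /(_ isT).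
apply/negP; rewrite -ltNge.
rewrite /Psi (bigD1 i) /=; last by rewrite hp.
rewrite [X in _ < X](bigD1 i) /=; last by rewrite hp.
have -> : \sum_(j | isI (p j) && (j != i)) Phi j (sg' j) = \sum_(j | isI (p j) && (j != i)) Phi j (sg j).
  apply: eq_bigr => j /andP [_ hj]; by rewrite /sg' /upd (negbTE hj).
rewrite ltrD2r /sg' /upd eqxx.
apply: (ltr_sum_one (i0 := enc sgw)).
- by move=> c /validbP hc; apply: hle.
- by rewrite encK; apply: validbP'.
- by rewrite encK.
Qed.

End Main.

Theorem proposition1 (R : realFieldType) (N : nat) (p : 'I_N -> pref)
  (q : 'I_N -> R) (pi : R)
  (hpi : 0 < pi < 1) (hq : forall i, 1 / 2%:R <= q i <= 1) :
  exists sg : profile N (ldact N),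
    is_equilibrium p q pi (@ld_valid N) (@ld_winA R N) sg /\
    (forall tau, is_equilibrium p q pi (@ld_valid N) (@ld_winA R N) tau ->
       pcorrect q pi (@ld_winA R N) tau <= pcorrect q pi (@ld_winA R N) sg) /\
    (forall tau, is_equilibrium p q pi (@dd_valid N) (@ld_winA R N) tau ->
       pcorrect q pi (@ld_winA R N) tau <= pcorrect q pi (@ld_winA R N) sg) /\
    (forall (J : {set 'I_N}) (tau : profile N (rdact N)),
       is_equilibrium p q pi (rd_valid J) (@rd_winA R N) tau ->
       pcorrect q pi (@rd_winA R N) tau <= pcorrect q pi (@ld_winA R N) sg).
Proof.
have [sg [heq hmax]] := @main_ld R N p q pi hpi hq.
exists sg; split => //; split; last split.
- move=> tau htau; apply: hmax; apply: PbP'.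
    by case: htau => [[hv _] _].
  have Hab : forall i : 'I_N, ld_valid i LAbstain by [].
  have HoA : forall i : 'I_N, ld_valid i ((fun _ => LVoteA) i) by [].
  have HoB : forall i : 'I_N, ld_valid i ((fun _ => LVoteB) i) by [].
  have H3A' : forall (act : 'I_N -> ldact N) i, (forall j, ld_valid j (act j)) ->
   ld_winA act <= ld_winA (setp act i ((fun _ => LVoteA) i)) :> R by move=> act i _; exact: ld_H3A.
  have H3B' : forall (act : 'I_N -> ldact N) i, (forall j, ld_valid j (act j)) ->
   ld_winA (setp act i ((fun _ => LVoteB) i)) <= ld_winA act :> R by move=> act i _; exact: ld_H3B.
  have H4A' : forall i (x : ldact N), ld_valid i x -> x <> (fun _ => LVoteA) i ->
    ld_winA (setp (fun _ => LAbstain) i x) < ld_winA (setp (fun _ => LAbstain) i ((fun _ => LVoteA) i)) :> R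
    by move=> i x _; exact: ld_H4A.
  have H4B' : forall i (x : ldact N), ld_valid i x -> x <> (fun _ => LVoteB) i ->
    ld_winA (setp (fun _ => LAbstain) i ((fun _ => LVoteB) i)) < ld_winA (setp (fun _ => LAbstain) i x) :> R
    by move=> i x _; exact: ld_H4B.
  move=> i b; case hp: (p i) => //=.
  + by rewrite (eq_own_A hpi hq Hab HoA H3A' H4A' b htau hp).
  + by rewrite (eq_own_B hpi hq Hab HoB H3B' H4B' b htau hp).
- move=> tau htau; apply: hmax; apply: PbP'.
    case: htau => [[hv _] _] i b; have := hv i b; by case: (tau i b).
  have Hab : forall i : 'I_N, dd_valid i LAbstain by [].
  have HoA : forall i : 'I_N, dd_valid i ((fun _ => LVoteA) i) by [].
  have HoB : forall i : 'I_N, dd_valid i ((fun _ => LVoteB) i) by [].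
  have H3A' : forall (act : 'I_N -> ldact N) i, (forall j, dd_valid j (act j)) ->
   ld_winA act <= ld_winA (setp act i ((fun _ => LVoteA) i)) :> R by move=> act i _; exact: ld_H3A.
  have H3B' : forall (act : 'I_N -> ldact N) i, (forall j, dd_valid j (act j)) ->
   ld_winA (setp act i ((fun _ => LVoteB) i)) <= ld_winA act :> R by move=> act i _; exact: ld_H3B.
  have H4A' : forall i (x : ldact N), dd_valid i x -> x <> (fun _ => LVoteA) i ->
    ld_winA (setp (fun _ => LAbstain) i x) < ld_winA (setp (fun _ => LAbstain) i ((fun _ => LVoteA) i)) :> R
    by move=> i x _; exact: ld_H4A.
  have H4B' : forall i (x : ldact N), dd_valid i x -> x <> (fun _ => LVoteB) i ->
    ld_winA (setp (fun _ => LAbstain) i ((fun _ => LVoteB) i)) < ld_winA (setp (fun _ => LAbstain) i x) :> R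
    by move=> i x _; exact: ld_H4B.
  move=> i b; case hp: (p i) => //=.
  + by rewrite (eq_own_A hpi hq Hab HoA H3A' H4A' b htau hp).
  + by rewrite (eq_own_B hpi hq Hab HoB H3B' H4B' b htau hp).
- move=> J tau htau.
  have hv : valid_prof (rd_valid J) tau by case: htau => [[]].
  pose tau' : profile N (ldact N) := fun i b => emb (tau i b).
  have -> : pcorrect q pi (@rd_winA R N) tau = pcorrect q pi (@ld_winA R N) tau'.
    apply: eq_bigr => w _; apply: eq_bigr => s _.
    by rewrite (@rd_ld_win R N J (fun j => tau j (s j))) //; move=> j; apply: hv.
  apply: hmax; apply: PbP'.
    move=> i b; have := hv i b; rewrite /tau' /rd_valid.
    case: (tau i b) => //=; case hi: (i \in J) => // j hj.
    by apply/eqP => hji; move: hj; rewrite hji hi.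
  have Hab : forall i : 'I_N, rd_valid J i RAbstain by move=> i; exact: abst_valid.
  have HoA : forall i : 'I_N, rd_valid J i (rdoA J i) by move=> i; exact: rdoA_valid.
  have HoB : forall i : 'I_N, rd_valid J i (rdoB J i) by move=> i; exact: rdoB_valid.
  have H3A' : forall (act : 'I_N -> rdact N) i, (forall j, rd_valid J j (act j)) ->
   rd_winA act <= rd_winA (setp act i (rdoA J i)) :> R by move=> act i; exact: rd_H3A.
  have H3B' : forall (act : 'I_N -> rdact N) i, (forall j, rd_valid J j (act j)) ->
   rd_winA (setp act i (rdoB J i)) <= rd_winA act :> R by move=> act i; exact: rd_H3B.
  have H4A' : forall i (x : rdact N), rd_valid J i x -> x <> rdoA J i ->
    rd_winA (setp (fun _ => RAbstain) i x) < rd_winA (setp (fun _ => RAbstain) i (rdoA J i)) :> R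
    by move=> i x; exact: rd_H4A.
  have H4B' : forall i (x : rdact N), rd_valid J i x -> x <> rdoB J i ->
    rd_winA (setp (fun _ => RAbstain) i (rdoB J i)) < rd_winA (setp (fun _ => RAbstain) i x) :> R
    by move=> i x; exact: rd_H4B.
  move=> i b; case hp: (p i) => //=; rewrite /tau'.
  + by rewrite (eq_own_A hpi hq Hab HoA H3A' H4A' b htau hp) emb_rdoA.
  + by rewrite (eq_own_B hpi hq Hab HoB H3B' H4B' b htau hp) emb_rdoB.
Qed.
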